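(* Let $G$ be a permutation group and $K$ a field with a $G$-action. Assume that for every open subgroup $U\subset G$ there is an open subgroup $U'\subset U$ such that for every $g\in G$ the subgroup $gU'g^{-1}\cap U$ has infinite index in $U$. Then $\mathrm{Sm}_K(G)$ has no non-zero projective objects.
   Context: A permutation group is a Hausdorff topological group admitting a base of open sets consisting of left and right translates of subgroups. $\mathrm{Sm}_K(G)$ is the category of smooth left modules over the skew group ring $K\langle G\rangle$ ($(a[g])(b[h])=ab^g[gh]$), smooth meaning every element has an open stabilizer. *)

(* Defs.v *)
From HB Require Import structures.
From mathcomp Require Import all_boot all_algebra.
From mathcomp Require Import boolp classical_sets functions cardinality topology.
Set Implicit Arguments. Unset Strict Implicit. Unset Printing Implicit Defensive.
Import GRing.Theory.
Local Open Scope classical_set_scope.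
Local Open Scope ring_scope.

Section Defs.
Variables (G : topologicalType) (mul : G -> G -> G) (one : G) (inv : G -> G).

Definition is_group : Prop :=
  [/\ forall x y z, mul x (mul y z) = mul (mul x y) z,
      forall x, mul one x = x &
      forall x, mul (inv x) x = one].

Definition is_subgroup (H : set G) : Prop :=
  [/\ H one, forall x y, H x -> H y -> H (mul x y) & forall x, H x -> H (inv x)].

Definition lcoset (g : G) (H : set G) : set G := [set mul g h | h in H].
Definition rcoset (H : set G) (g : G) : set G := [set mul h g | h in H].

Definition is_perm_group : Prop :=
  [/\ is_group,
      continuous (fun p : G * G => mul p.1 p.2),
      continuous inv,
      hausdorff_space G &
      forall (A : set G) (x : G), open A -> A x ->
        exists (H : set G) (g : G) (B : set G),
          [/\ is_subgroup H, B = lcoset g H \/ B = rcoset H g,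
              open B, B x & B `<=` A]].

Definition is_open_subgroup (U : set G) : Prop := is_subgroup U /\ open U.

Definition conjsub (g : G) (H : set G) : set G :=
  [set mul (mul g h) (inv g) | h in H].

Definition infinite_index (H U : set G) : Prop :=
  ~ finite_set [set lcoset x H | x in U].

Variable (K : fieldType).

Definition is_field_action (sigma : G -> K -> K) : Prop :=
  [/\ forall g a b, sigma g (a + b) = sigma g a + sigma g b,
      forall g a b, sigma g (a * b) = sigma g a * sigma g b,
      forall g, sigma g 1 = 1,
      forall a, sigma one a = a &
      forall g h a, sigma (mul g h) a = sigma g (sigma h a)].

Variable (sigma : G -> K -> K).

(* A left K<G>-module, K<G> the skew group ring with (a[g])(b[h]) = a b^g [gh],
   is a K-vector space M with an action of G by additive maps such that
   [g](b m) = b^g ([g] m). *)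
Definition is_smooth_mod (M : lmodType K) (act : G -> M -> M) : Prop :=
  [/\ forall m, act one m = m,
      forall g h m, act (mul g h) m = act g (act h m),
      forall g m m', act g (m + m') = act g m + act g m',
      forall g (b : K) m, act g (b *: m) = sigma g b *: act g m &
      forall m, open [set g | act g m = m]].

Definition is_smooth_hom (M N : lmodType K) (actM : G -> M -> M)
  (actN : G -> N -> N) (f : M -> N) : Prop :=
  (forall (a : K) m m', f (a *: m + m') = a *: f m + f m') /\
  (forall g m, f (actM g m) = actN g (f m)).

Definition is_smooth_epi (M N : lmodType K) (actM : G -> M -> M)
  (actN : G -> N -> N) (f : M -> N) : Prop :=
  forall (Z : lmodType K) (actZ : G -> Z -> Z), is_smooth_mod actZ ->
  forall u v : N -> Z, is_smooth_hom actN actZ u -> is_smooth_hom actN actZ v ->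
    u \o f = v \o f -> u = v.

Definition is_smooth_projective (P : lmodType K) (actP : G -> P -> P) : Prop :=
  forall (M N : lmodType K) (actM : G -> M -> M) (actN : G -> N -> N),
    is_smooth_mod actM -> is_smooth_mod actN ->
  forall f : M -> N, is_smooth_hom actM actN f -> is_smooth_epi actM actN f ->
  forall p : P -> N, is_smooth_hom actP actN p ->
    exists q : P -> M, is_smooth_hom actP actM q /\ f \o q = p.

End Defs.

(* Main.v *)
Require Import Defs.
From HB Require Import structures.
From mathcomp Require Import all_boot all_algebra.
From mathcomp Require Import finmap.
From mathcomp Require Import boolp classical_sets functions cardinality topology fsbigop.
Set Implicit Arguments. Unset Strict Implicit. Unset Printing Implicit Defensive.
Import GRing.Theory.
Local Open Scope classical_set_scope.
Local Open Scope ring_scope.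

Definition fsprop (T : choiceType) (K : fieldType) (good : set T) (c : T -> K) :=
  finite_set [set t | c t != 0] /\ [set t | c t != 0] `<=` good.

Record fs (T : choiceType) (K : fieldType) (good : set T) :=
  FS { fsf :> T -> K; fsP : fsprop good fsf }.

HB.instance Definition _ T K good := gen_eqMixin (@fs T K good).
HB.instance Definition _ T K good := gen_choiceMixin (@fs T K good).

Section Free.
Variables (T : choiceType) (K : fieldType) (good : set T).
Local Notation M := (@fs T K good).

Lemma fs_ext (a b : M) : (forall t, a t = b t) -> a = b.
Proof.
case: a b => [a Pa] [b Pb] /= e.
have ab : a = b by apply: funext.
subst b; congr FS; exact: Prop_irrelevance.
Qed.

Lemma fsprop0 : fsprop good (fun _ => 0 : K).
Proof.
split; last by move=> t /=; rewrite eqxx.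
suff -> : [set t | (0:K) != 0] = set0 :> set T by [].
by apply/seteqP; split => t //=; rewrite eqxx.
Qed.

Lemma fspropD (a b : M) : fsprop good (fun t => a t + b t).
Proof.
case: a b => [a [fa ga]] [b [fb gb]] /=.
have sub : [set t | a t + b t != 0] `<=` [set t | a t != 0] `|` [set t | b t != 0].
  move=> t /=; case: (eqVneq (a t) 0) => [->|]; last by left.
  by rewrite add0r => ?; right.
split; first by apply: sub_finite_set sub _; rewrite finite_setU.
by move=> t /sub [/ga|/gb].
Qed.

Lemma fspropZ (k : K) (a : M) : fsprop good (fun t => k * a t).
Proof.
case: a => [a [fa ga]] /=.
have sub : [set t | k * a t != 0] `<=` [set t | a t != 0].
  by move=> t /=; apply: contraNN => /eqP ->; rewrite mulr0.
by split; [apply: sub_finite_set sub _| move=> t /sub /ga].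
Qed.

Lemma fspropN (a : M) : fsprop good (fun t => - a t).
Proof.
have := fspropZ (-1) a; congr fsprop; apply: funext => t; by rewrite mulN1r.
Qed.

Definition fs0 : M := FS fsprop0.
Definition fsadd (a b : M) : M := FS (fspropD a b).
Definition fsopp (a : M) : M := FS (fspropN a).
Definition fsscale (k : K) (a : M) : M := FS (fspropZ k a).

Lemma fsaddA : associative fsadd.
Proof. by move=> a b c; apply: fs_ext => t /=; rewrite addrA. Qed.
Lemma fsaddC : commutative fsadd.
Proof. by move=> a b; apply: fs_ext => t /=; rewrite addrC. Qed.
Lemma fsadd0 : left_id fs0 fsadd.
Proof. by move=> a; apply: fs_ext => t /=; rewrite add0r. Qed.
Lemma fsaddN : left_inverse fs0 fsopp fsadd.
Proof. by move=> a; apply: fs_ext => t /=; rewrite addNr. Qed.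

End Free.

HB.instance Definition _ (T : choiceType) (K : fieldType) (good : set T) :=
  GRing.isZmodule.Build (@fs T K good) (@fsaddA T K good) (@fsaddC T K good)
    (@fsadd0 T K good) (@fsaddN T K good).

Section Free2.
Variables (T : choiceType) (K : fieldType) (good : set T).
Local Notation M := (@fs T K good).
Lemma fsscaleA a b (v : M) : fsscale a (fsscale b v) = fsscale (a * b) v.
Proof. by apply: fs_ext => t /=; rewrite mulrA. Qed.
Lemma fsscale1 : left_id 1 (@fsscale T K good).
Proof. by move=> v; apply: fs_ext => t /=; rewrite mul1r. Qed.
Lemma fsscaleDr : right_distributive (@fsscale T K good) +%R.
Proof. by move=> a u v; apply: fs_ext => t /=; rewrite mulrDr. Qed.
Lemma fsscaleDl (v : M) : {morph (@fsscale T K good)^~ v: a b / a + b}.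
Proof. by move=> a b; apply: fs_ext => t /=; rewrite mulrDl. Qed.
End Free2.

HB.instance Definition _ (T : choiceType) (K : fieldType) (good : set T) :=
  GRing.Zmodule_isLmodule.Build K (@fs T K good) (@fsscaleA T K good)
   (@fsscale1 T K good) (@fsscaleDr T K good) (@fsscaleDl T K good).

Lemma fsE_add T K good (a b : @fs T K good) t : (a + b) t = a t + b t.
Proof. by []. Qed.
Lemma fsE_scale T K good k (a : @fs T K good) t : (k *: a) t = k * a t.
Proof. by []. Qed.
Lemma fsE_0 T K good t : (0 : @fs T K good) t = 0.
Proof. by []. Qed.

Section Grp.
Variables (G : topologicalType) (mul : G -> G -> G) (one : G) (inv : G -> G).
Hypothesis HG : is_perm_group mul one inv.

Let mulA : forall x y z, mul x (mul y z) = mul (mul x y) z.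
Proof. by case: HG => -[]. Qed.
Let mul1g : forall x, mul one x = x.
Proof. by case: HG => -[]. Qed.
Let mulVg : forall x, mul (inv x) x = one.
Proof. by case: HG => -[]. Qed.

Lemma mulgV x : mul x (inv x) = one.
Proof.
rewrite -[mul x (inv x)]mul1g -{1}(mulVg (inv x)) -mulA mulA.
by rewrite mulA -(mulA (inv (inv x))) mulVg -(mulA (inv (inv x))) mul1g mulVg.
Qed.

Lemma mulg1 x : mul x one = x.
Proof. by rewrite -(mulVg x) mulA mulgV mul1g. Qed.

Lemma mulKg x y : mul (inv x) (mul x y) = y.
Proof. by rewrite mulA mulVg mul1g. Qed.
Lemma mulKVg x y : mul x (mul (inv x) y) = y.
Proof. by rewrite mulA mulgV mul1g. Qed.

Lemma cont_lmul a : continuous (mul a).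
Proof.
move=> g.
have -> : mul a = (fun p : G * G => mul p.1 p.2) \o (fun g => (a, g)) by [].
apply: continuous_comp; last by case: HG => _ + _ _ _; apply.
by apply: cvg_pair; [exact: cvg_cst | exact: cvg_id].
Qed.

Lemma cont_rmul b : continuous (fun g => mul g b).
Proof.
move=> g.
have -> : (fun g => mul g b) = (fun p : G * G => mul p.1 p.2) \o (fun g => (g, b)) by [].
apply: continuous_comp; last by case: HG => _ + _ _ _; apply.
by apply: cvg_pair; [exact: cvg_id | exact: cvg_cst].
Qed.

Lemma subgroup_open S : is_subgroup mul one inv S -> nbhs one S -> open S.
Proof.
move=> [S1 SM SV] nS; rewrite openE => g Sg.
have : (mul (inv g)) @ g --> mul (inv g) g by apply: cont_lmul.
rewrite mulVg => /(_ _ nS) /= H.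
have H' : nbhs g [set h | S (mul (inv g) h)] := H.
rewrite /interior; apply: filterS H' => h /= Sh.
by rewrite -(mulKVg g h); apply: SM.
Qed.

End Grp.
Section Main.
Variables (G : topologicalType) (mul : G -> G -> G) (one : G) (inv : G -> G)
  (K : fieldType) (sigma : G -> K -> K).
Hypothesis HG : is_perm_group mul one inv.
Hypothesis Hs : is_field_action mul one sigma.
Variables (P : lmodType K) (actP : G -> P -> P).
Hypothesis HP : is_smooth_mod mul one sigma actP.
Variable x : P.
Hypothesis x0 : x != 0.
Hypothesis Hyp : forall U : set G, is_open_subgroup mul one inv U ->
     exists U' : set G, [/\ is_open_subgroup mul one inv U', U' `<=` U &
       forall g : G, infinite_index mul (conjsub mul inv g U' `&` U) U].

Let mulA : forall x y z, mul x (mul y z) = mul (mul x y) z.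
Proof. by case: HG => -[]. Qed.
Let mul1g : forall x, mul one x = x.
Proof. by case: HG => -[]. Qed.
Let mulVg : forall x, mul (inv x) x = one.
Proof. by case: HG => -[]. Qed.
Let mulgV := mulgV HG.
Let mulg1 := mulg1 HG.
Let mulKVg := mulKVg HG.
Let mulKg := mulKg HG.

Let sD : forall g a b, sigma g (a + b) = sigma g a + sigma g b.
Proof. by case: Hs. Qed.
Let sM : forall g a b, sigma g (a * b) = sigma g a * sigma g b.
Proof. by case: Hs. Qed.
Let s1 : forall g, sigma g 1 = 1.
Proof. by case: Hs. Qed.

Lemma sigma0 g : sigma g 0 = 0.
Proof.
have h := sD g 0 0; rewrite addr0 in h.
by apply: (@addrI _ (sigma g 0)); rewrite -h addr0.
Qed.

Lemma sigma_eq0 g a : (sigma g a == 0) = (a == 0).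
Proof.
case: (eqVneq a 0) => [->|a0]; first by rewrite sigma0 eqxx.
apply/negbTE; apply/negP => /eqP h.
have := sM g a a^-1; rewrite mulfV // s1 h mul0r => /eqP.
by rewrite oner_eq0.
Qed.

Let aP1 : forall m, actP one m = m. Proof. by case: HP. Qed.
Let aPM : forall g h m, actP (mul g h) m = actP g (actP h m). Proof. by case: HP. Qed.
Let aPD : forall g m m', actP g (m + m') = actP g m + actP g m'. Proof. by case: HP. Qed.
Let aPZ : forall g (b : K) m, actP g (b *: m) = sigma g b *: actP g m. Proof. by case: HP. Qed.
Let aPo : forall m, open [set g | actP g m = m]. Proof. by case: HP. Qed.

Lemma aP0 g : actP g 0 = 0.
Proof.
have h := aPD g 0 0; rewrite addr0 in h.
by apply: (@addrI _ (actP g 0)); rewrite -h addr0.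
Qed.

Definition stab (z : P) := [set g | actP g z = z].

Lemma stab_sub z : is_subgroup mul one inv (stab z).
Proof.
split => [|g h /= gz hz|g /= gz]; rewrite /stab /=.
- exact: aP1.
- by rewrite aPM hz gz.
- by rewrite -{1}gz -aPM mulVg aP1.
Qed.

Lemma stab_os z : is_open_subgroup mul one inv (stab z).
Proof. by split; [exact: stab_sub | exact: aPo]. Qed.

Lemma osI U V : is_open_subgroup mul one inv U -> is_open_subgroup mul one inv V ->
  is_open_subgroup mul one inv (U `&` V).
Proof.
move=> [[U1 UM UV] Uo] [[V1 VM VV] Vo]; split; last exact: openI.
split => //; first by move=> g h [? ?] [? ?]; split; [apply: UM|apply: VM].
by move=> g [? ?]; split; [apply: UV|apply: VV].
Qed.

Definition W (y : P) := stab x `&` stab y.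
Lemma W_os y : is_open_subgroup mul one inv (W y).
Proof. exact: osI (stab_os x) (stab_os y). Qed.

Definition Wp (y : P) : set G := projT1 (cid (Hyp (W_os y))).
Lemma WpP y : [/\ is_open_subgroup mul one inv (Wp y), Wp y `<=` W y &
       forall g : G, infinite_index mul (conjsub mul inv g (Wp y) `&` W y) (W y)].
Proof. exact: (projT2 (cid (Hyp (W_os y)))). Qed.

Lemma lcosetM g h S : lcoset mul g (lcoset mul h S) = lcoset mul (mul g h) S.
Proof.
apply/seteqP; split => z /=.
  by case=> _ [k Sk <-] <-; exists k => //; rewrite mulA.
by case=> k Sk <-; exists (mul h k); [exists k | rewrite mulA].
Qed.

Lemma lcoset1 S : lcoset mul one S = S.
Proof.
apply/seteqP; split => z /=; first by case=> k Sk <-; rewrite mul1g.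
by move=> Sz; exists z => //; rewrite mul1g.
Qed.

Lemma lcoset_sub H w : is_subgroup mul one inv H -> H w -> lcoset mul w H = H.
Proof.
move=> [H1 HM HV] Hw; apply/seteqP; split => z /=.
  by case=> k Hk <-; apply: HM.
move=> Hz; exists (mul (inv w) z); first by apply: HM => //; apply: HV.
by rewrite mulKVg.
Qed.

Definition T := (P * set G)%type.
Definition good : set T := fun t => exists h, t.2 = lcoset mul h (Wp t.1).
Definition tact g (t : T) : T := (t.1, lcoset mul g t.2).

Lemma tactM g h t : tact g (tact h t) = tact (mul g h) t.
Proof. by rewrite /tact /= lcosetM. Qed.
Lemma tact1 t : tact one t = t.
Proof. by case: t => a b; rewrite /tact /= lcoset1. Qed.
Lemma tactK g t : tact (inv g) (tact g t) = t.
Proof. by rewrite tactM mulVg tact1. Qed.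
Lemma tactKV g t : tact g (tact (inv g) t) = t.
Proof. by rewrite tactM mulgV tact1. Qed.
Lemma tact_good g t : good t -> good (tact g t).
Proof. by case=> h e; exists (mul g h); rewrite /= e lcosetM. Qed.

Definition M := @fs T K good.
Lemma inv1 : inv one = one.
Proof. by rewrite -[inv one]mulg1 mulVg. Qed.

Lemma invM g h : inv (mul g h) = mul (inv h) (inv g).
Proof.
rewrite -[RHS](mulKg (mul g h)).
have -> : mul (mul g h) (mul (inv h) (inv g)) = one.
  by rewrite -mulA (mulA h) mulgV mul1g mulgV.
by rewrite mulg1.
Qed.

Lemma supp_fin (c : M) : finite_set [set t | c t != 0].
Proof. by case: c => cf []. Qed.
Lemma supp_good (c : M) t : c t != 0 -> good t.
Proof. by case: c => cf [_ H] /=; apply: H. Qed.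

Definition actMf g (c : M) : T -> K := fun t => sigma g (c (tact (inv g) t)).

Lemma actM_prop g (c : M) : fsprop good (actMf g c).
Proof.
have sub : [set t | actMf g c t != 0] `<=` tact g @` [set t | c t != 0].
  move=> t /=; rewrite /actMf sigma_eq0 => ct.
  by exists (tact (inv g) t) => //; rewrite tactKV.
split; first by apply: sub_finite_set sub _; apply: finite_image; apply: supp_fin.
by move=> t /sub [t' /supp_good gt' <-]; apply: tact_good.
Qed.

Definition actM g (c : M) : M := FS (actM_prop g c).

Lemma actME g (c : M) t : actM g c t = sigma g (c (tact (inv g) t)).
Proof. by []. Qed.

Lemma sigma1 a : sigma one a = a. Proof. by case: Hs. Qed.
Lemma sigmaM g h a : sigma (mul g h) a = sigma g (sigma h a). Proof. by case: Hs. Qed.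

Lemma actM1 c : actM one c = c.
Proof. by apply: fs_ext => t; rewrite actME inv1 tact1 sigma1. Qed.

Lemma actMM g h c : actM (mul g h) c = actM g (actM h c).
Proof. by apply: fs_ext => t; rewrite !actME invM sigmaM tactM. Qed.

Lemma actMD g c c' : actM g (c + c') = actM g c + actM g c'.
Proof. by apply: fs_ext => t; rewrite fsE_add !actME fsE_add sD. Qed.

Lemma actMZ g b c : actM g (b *: c) = sigma g b *: actM g c.
Proof. by apply: fs_ext => t; rewrite fsE_scale !actME fsE_scale sM. Qed.

Lemma fixK g (b : K) : stab x g -> stab (b *: x) g -> sigma g b = b.
Proof.
rewrite /stab /= aPZ => -> /eqP; rewrite -subr_eq0 -scalerBl scaler_eq0.
by rewrite (negbTE x0) orbF subr_eq0 => /eqP.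
Qed.

Lemma nbhs_stab z : nbhs one (stab z).
Proof. by apply: open_nbhs_nbhs; split; [exact: aPo | exact: aP1]. Qed.

Lemma nbhs_tstab t : good t -> nbhs one [set g | tact g t = t].
Proof.
case: t => y S [h /= e].
have [[[W1 WM WV] Wo] _ _] := WpP y.
have : (fun g => mul (inv h) (mul g h)) @ one --> mul (inv h) (mul one h).
  apply: (@continuous_comp _ _ _ (fun g => mul g h) (mul (inv h)) one).
    exact: (@cont_rmul _ _ _ _ HG h one).
  exact: (@cont_lmul _ _ _ _ HG (inv h) (mul one h)).
rewrite mul1g mulVg => /(_ (Wp y)) H.
have nW : nbhs one (Wp y) by apply: open_nbhs_nbhs; split.
have {H} H : nbhs one [set g | Wp y (mul (inv h) (mul g h))] := H nW.
apply: filterS H => g /= Wg.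
rewrite /tact /= e lcosetM -(mulKVg h (mul g h)) -lcosetM (@lcoset_sub (Wp y)) //.
Qed.

Lemma actM_open (c : M) : open [set g | actM g c = c].
Proof.
apply: (subgroup_open HG).
  split => [|g h /= gc hc|g /= gc]; first exact: actM1.
    by rewrite actMM hc gc.
  by rewrite -{1}gc -actMM mulVg actM1.
set D := [set t | c t != 0].
pose Ot t := [set g | tact g t = t] `&` (stab x `&` stab (c t *: x)).
have : nbhs one (\bigcap_(t in [set` fset_set D]) Ot t).
  apply: filter_bigI => t; rewrite in_fset_set ?inE; last exact: supp_fin.
  move=> Dt; apply: filterI; first exact: nbhs_tstab (supp_good Dt).
  by apply: filterI; apply: nbhs_stab.
rewrite fset_setK; last exact: supp_fin.
apply: filterS => g Og; apply: fs_ext => t; rewrite actME.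
case: (eqVneq (c t) 0) => [ct0|ct0].
  rewrite ct0; case: (eqVneq (c (tact (inv g) t)) 0) => [->|ct']; first exact: sigma0.
  have [e _] := Og _ ct'.
  by move: ct'; rewrite -e tactKV ct0 eqxx.
have [e [sx sb]] := Og _ ct0.
have -> : tact (inv g) t = t by rewrite -{1}e tactK.
exact: fixK.
Qed.

Lemma smoothM : is_smooth_mod mul one sigma actM.
Proof.
split; [exact: actM1 | exact: actMM | exact: actMD | exact: actMZ | exact: actM_open].
Qed.
Definition val (t : T) : P := actP (xget one t.2) t.1.

Lemma val_good t h : t.2 = lcoset mul h (Wp t.1) -> val t = actP h t.1.
Proof.
destruct t as [y S]; move=> /= e; rewrite /val /=.
have [[[W1 _ _] _] WW _] := WpP y.
have : lcoset mul h (Wp y) (xget one S).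
  by rewrite -e; apply: xgetPex; exists (mul h one); rewrite e; exists one.
rewrite /lcoset => -[w Ww <-].
by rewrite aPM; have [_ /= ->] := WW _ Ww.
Qed.

Lemma val_tact g t : good t -> val (tact g t) = actP g (val t).
Proof.
case=> h e; rewrite (val_good e) (@val_good _ (mul g h)) ?aPM //.
by rewrite /tact /= e lcosetM.
Qed.

Definition fmap (c : M) : P := \sum_(t \in [set: T]) c t *: val t.

Lemma fmapD (c : M) D : [set t | c t != 0] `<=` D -> fmap c = \sum_(t \in D) c t *: val t.
Proof.
move=> sD0; rewrite /fmap.
rewrite -(fsbig_widen [set t | c t != 0] [set: T]) //; last first.
  by move=> t [_ /=]; rewrite /preimage /= => /negP; rewrite negbK => /eqP ->; rewrite scale0r.
rewrite (fsbig_widen [set t | c t != 0] D) //.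
by move=> t [_ /=] /negP; rewrite negbK /preimage /= => /eqP ->; rewrite scale0r.
Qed.

Lemma fmap_lin a (c c' : M) : fmap (a *: c + c') = a *: fmap c + fmap c'.
Proof.
set D := [set t | c t != 0] `|` [set t | c' t != 0].
have fD : finite_set D by rewrite finite_setU; split; apply: supp_fin.
rewrite (@fmapD c D); last by move=> t ?; left.
rewrite (@fmapD c' D); last by move=> t ?; right.
rewrite (@fmapD _ D); last first.
  move=> t /=.
  case: (eqVneq (c t) 0) => [->|]; last by left.
  by rewrite mulr0 add0r => ?; right.
rewrite !fsbig_finite // scaler_sumr -big_split /=.
apply: eq_bigr => t _.
by rewrite scalerDl scalerA.
Qed.

Lemma act_sum g (s : seq T) (F : T -> P) :
  actP g (\sum_(t <- s) F t) = \sum_(t <- s) actP g (F t).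
Proof.
elim: s => [|a s IH]; first by rewrite !big_nil aP0.
by rewrite !big_cons aPD IH.
Qed.

Lemma fmap_eq g (c : M) : fmap (actM g c) = actP g (fmap c).
Proof.
rewrite (@fmapD _ (tact g @` [set t | c t != 0])); last first.
  move=> t /=; rewrite ?actME sigma_eq0 => ct.
  by exists (tact (inv g) t) => //; rewrite tactKV.
rewrite fsbig_image; last by move=> a b _ _ e; rewrite -(tactK g a) e tactK.
rewrite (@fmapD c [set t | c t != 0]) //.
rewrite !fsbig_finite; try exact: supp_fin.
rewrite act_sum big_seq [RHS]big_seq; apply: eq_bigr => t.
rewrite in_fset_set ?inE; last exact: supp_fin.
move=> /= ct; rewrite /actMf tactK aPZ val_tact //.
exact: (supp_good ct).
Qed.

Lemma homf : is_smooth_hom actM actP fmap.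
Proof. by split; [exact: fmap_lin | exact: fmap_eq]. Qed.

Lemma good_pt n : good (n, Wp n).
Proof. by exists one; rewrite /= lcoset1. Qed.

Lemma delta_prop n : fsprop good (fun t : T => if t == (n, Wp n) then (1 : K) else 0).
Proof.
have sub : [set t : T | (if t == (n, Wp n) then (1 : K) else 0) != 0] `<=` [set (n, Wp n)].
  by move=> t /=; case: (eqVneq t (n, Wp n)) => [-> //|_]; rewrite eqxx.
split; first by apply: sub_finite_set sub _; apply: finite_set1.
by move=> t /sub ->; apply: good_pt.
Qed.

Definition delta n : M := FS (delta_prop n).

Lemma fmap_delta n : fmap (delta n) = n.
Proof.
rewrite (@fmapD _ [set (n, Wp n)]); last by move=> t /=; case: (eqVneq t (n, Wp n)) => [-> //|_]; rewrite eqxx.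
rewrite fsbig_set1 /= eqxx scale1r (@val_good _ one) ?aP1 //=.
by rewrite lcoset1.
Qed.

Lemma epif : is_smooth_epi mul one sigma actM actP fmap.
Proof.
move=> Z actZ _ u v _ _ e; apply: funext => n.
by rewrite -(fmap_delta n); have := congr1 (fun F => F (delta n)) e.
Qed.

Lemma fmap0 : fmap 0 = 0.
Proof.
rewrite (@fmapD _ set0); first by rewrite fsbig_set0.
by move=> t /=; rewrite eqxx.
Qed.
Lemma homid : is_smooth_hom actP actP id.
Proof. by split. Qed.

Lemma W_sub y : is_subgroup mul one inv (W y).
Proof. by case: (W_os y). Qed.

Lemma main_contra : is_smooth_projective mul one sigma actP -> False.
Proof.
move=> proj.
have [q [[qlin qeq] fq]] := proj M P actM actP smoothM HP fmap homf epif id homid.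
set c := q x.
have fc : fmap c = x by have := congr1 (fun F => F x) fq.
have [t ct] : exists t, c t != 0.
  apply: contrapT => /forallNP H.
  have c0 : c = 0 by apply: fs_ext => t; have := H t; move/negP; rewrite negbK => /eqP.
  by move: x0; rewrite -fc c0 fmap0 eqxx.
have [h e] := supp_good ct.
destruct t as [y S]; rewrite /= in e.
have [[[Wp1 WpM WpV] _] WpW Hinf] := WpP y.
have [W1 WM WV] := W_sub y.
have inv_c w : W y w -> actM w c = c.
  by move=> [wx _]; rewrite /c -qeq wx.
have Afin : finite_set [set lcoset mul w S | w in W y].
  apply: sub_finite_set (finite_image snd (supp_fin c)).
  move=> S' [w Ww <-]; exists (tact w (y, S)) => //=.
  rewrite -(inv_c w Ww) actME tactK sigma_eq0 //.
pose Fm S' := [set u | W y u /\ lcoset mul u S = S'].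
apply: (Hinf h); apply: sub_finite_set (finite_image Fm Afin).
move=> B [w Ww <-]; exists (lcoset mul w S); first by exists w.
apply/seteqP; split => z /=.
- case=> Wz ez.
  have : lcoset mul (mul z h) (Wp y) (mul z h).
    by exists one => //; rewrite mulg1.
  rewrite -lcosetM -e ez e lcosetM => -[k Wpk ek].
  have zE : z = mul w (mul (mul h k) (inv h)).
    by rewrite !mulA ek -mulA mulgV mulg1.
  exists (mul (mul h k) (inv h)) => //; split; first by exists k.
  have -> : mul (mul h k) (inv h) = mul (inv w) z by rewrite zE mulKg.
  by apply: WM => //; apply: WV.
- case=> u [[k Wpk <-] Wu] <-; split; first exact: WM.
  rewrite e !lcosetM.
  have -> : mul (mul w (mul (mul h k) (inv h))) h = mul (mul w h) k.
    by rewrite -mulA -(mulA (mul h k)) mulVg mulg1 mulA.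
  rewrite -lcosetM (@lcoset_sub (Wp y) k) //.
Qed.

End Main.

Theorem lemma3p4 (G : topologicalType) (mul : G -> G -> G) (one : G)
  (inv : G -> G) (K : fieldType) (sigma : G -> K -> K) :
  is_perm_group mul one inv ->
  is_field_action mul one sigma ->
  (forall U : set G, is_open_subgroup mul one inv U ->
     exists U' : set G, [/\ is_open_subgroup mul one inv U', U' `<=` U &
       forall g : G, infinite_index mul (conjsub mul inv g U' `&` U) U]) ->
  forall (P : lmodType K) (actP : G -> P -> P),
    is_smooth_mod mul one sigma actP ->
    is_smooth_projective mul one sigma actP ->
    forall x : P, x = 0.
Proof.
move=> HG Hs Hyp P actP HP proj x.
case: (eqVneq x 0) => // xn0; exfalso.
exact: (main_contra HG Hs HP xn0 Hyp proj).
Qed.
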